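(* Up to isomorphism, the specific sets of $S$-probabilities (for arbitrary sets $S$) are exactly the bounded posets with an antitone involution that have a full and uniform set of specific states. That is: every specific set of $S$-probabilities, with the pointwise order, $p\mapsto 1-p$, $0$ and $1$, is a bounded poset with an antitone involution having a full and uniform set of specific states; and conversely every bounded poset with an antitone involution having a full and uniform set of specific states is isomorphic to a specific set of $S$-probabilities for some set $S$.
   Context: An $S$-probability is a function $p\colon S\to[0,1]$; sets $P$ of them are ordered pointwise, $0,1$ are constant functions, sums are pointwise. In a bounded poset $\mathbf P=(P,\le,{}',0,1)$ with an antitone involution $'$ (i.e. $p\le q\Rightarrow q'\le p'$ and $p''=p$), $p\wedge q=0$ means the only lower bound of $p,q$ in $P$ is $0$. A set $P$ of $S$-probabilities is specific if (1) $0,1\in P$; (2) $p\in P\Rightarrow 1-p\in P$; (3) $p,q\in P$, $p\wedge q=0\Rightarrow p+q\in P$. A specific state on $\mathbf P$ is a map $s\colon P\to[0,1]$ with (S1) $s(0)=0$, $s(1)=1$; (S2) $s(p')=1-s(p)$; (S3) $p\le q\Rightarrow s(p)\le s(q)$; (S4) if $p\wedge q=0$ then there is $r\in P$ with $r\ge p$, $r\ge q$ and $s(r)=s(p)+s(q)$. A set $T$ of specific states is full if $s(p)\le s(q)$ for all $s\in T$ implies $p\le q$, and uniform if for every disjoint pair $p,q$ a single $r$ witnesses (S4) simultaneously for all $s\in T$. Isomorphism means an order isomorphism preserving $'$, $0$ and $1$. *)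

(* Defs.v *)
From Stdlib Require Export Reals.
Open Scope R_scope.

Definition is_bpai {T : Type} (le : T -> T -> Prop) (c : T -> T) (z o : T) : Prop :=
  (forall a, le a a) /\
  (forall a b, le a b -> le b a -> a = b) /\
  (forall a b d, le a b -> le b d -> le a d) /\
  (forall a, le z a /\ le a o) /\
  (forall a b, le a b -> le (c b) (c a)) /\
  (forall a, c (c a) = a).

(** p /\ q = 0 : the only lower bound of p and q is 0. *)
Definition disj {T : Type} (le : T -> T -> Prop) (z : T) (p q : T) : Prop :=
  forall r, le r p -> le r q -> r = z.

Definition is_specific_state {T : Type} (le : T -> T -> Prop) (c : T -> T) (z o : T)
  (s : T -> R) : Prop :=
  (forall p, 0 <= s p <= 1) /\
  s z = 0 /\ s o = 1 /\
  (forall p, s (c p) = 1 - s p) /\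
  (forall p q, le p q -> s p <= s q) /\
  (forall p q, disj le z p q -> exists r, le p r /\ le q r /\ s r = s p + s q).

Definition full_states {T : Type} (le : T -> T -> Prop) (St : (T -> R) -> Prop) : Prop :=
  forall p q, (forall s, St s -> s p <= s q) -> le p q.

Definition uniform_states {T : Type} (le : T -> T -> Prop) (z : T)
  (St : (T -> R) -> Prop) : Prop :=
  forall p q, disj le z p q ->
    exists r, le p r /\ le q r /\ forall s, St s -> s r = s p + s q.

Definition has_full_uniform_specific_states {T : Type} (le : T -> T -> Prop)
  (c : T -> T) (z o : T) : Prop :=
  exists St : (T -> R) -> Prop,
    (forall s, St s -> is_specific_state le c z o s) /\
    full_states le St /\ uniform_states le z St.

Definition pw_le {S : Type} (p q : S -> R) : Prop := forall x, p x <= q x.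

Record specific_set (S : Type) (P : (S -> R) -> Prop) : Prop := {
  sp_prob : forall p, P p -> forall x, 0 <= p x <= 1;
  sp_zero : P (fun _ => 0);
  sp_one : P (fun _ => 1);
  sp_compl : forall p, P p -> P (fun x => 1 - p x);
  sp_sum : forall p q, P p -> P q ->
    (forall r, P r -> pw_le r p -> pw_le r q -> r = (fun _ => 0)) ->
    P (fun x => p x + q x) }.

Definition sp_car (S : Type) (P : (S -> R) -> Prop) : Type := {p : S -> R | P p}.

Definition sp_le {S : Type} {P : (S -> R) -> Prop} (a b : sp_car S P) : Prop :=
  pw_le (proj1_sig a) (proj1_sig b).

Definition sp_c {S : Type} {P : (S -> R) -> Prop} (H : specific_set S P)
  (a : sp_car S P) : sp_car S P :=
  exist _ (fun x => 1 - proj1_sig a x) (sp_compl S P H _ (proj2_sig a)).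

Definition sp_z {S : Type} {P : (S -> R) -> Prop} (H : specific_set S P) : sp_car S P :=
  exist _ (fun _ => 0) (sp_zero S P H).

Definition sp_o {S : Type} {P : (S -> R) -> Prop} (H : specific_set S P) : sp_car S P :=
  exist _ (fun _ => 1) (sp_one S P H).

(* Main.v *)
Require Import Defs.
From Stdlib Require Import Reals Lra ProofIrrelevance FunctionalExtensionality.

Lemma sig_ext {A : Type} {Q : A -> Prop} (x y : {a | Q a}) :
  proj1_sig x = proj1_sig y -> x = y.
Proof.
  destruct x as [x hx], y as [y hy]; simpl; intros ->.
  f_equal; apply proof_irrelevance.
Qed.

Lemma part1 (S : Type) (P : (S -> R) -> Prop) (H : specific_set S P) :
      is_bpai (@sp_le S P) (sp_c H) (sp_z H) (sp_o H) /\
      has_full_uniform_specific_states (@sp_le S P) (sp_c H) (sp_z H) (sp_o H).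
Proof.
  assert (disjsum : forall p q : sp_car S P, disj (@sp_le S P) (sp_z H) p q ->
            P (fun x => proj1_sig p x + proj1_sig q x)).
  { intros [p hp] [q hq] D; simpl. apply (sp_sum S P H p q hp hq).
    intros r hr h1 h2. specialize (D (exist _ r hr) h1 h2).
    apply (f_equal (@proj1_sig _ _)) in D; exact D. }
  split.
  - unfold is_bpai, sp_le, pw_le; repeat split.
    + intros; lra.
    + intros a b h1 h2; apply sig_ext; apply functional_extensionality; intro x;
        specialize (h1 x); specialize (h2 x); lra.
    + intros a b d h1 h2 x; specialize (h1 x); specialize (h2 x); lra.
    + intros x; simpl; destruct a as [a ha]; simpl; apply (sp_prob S P H a ha).
    + intros x; simpl; destruct a as [a ha]; simpl; apply (sp_prob S P H a ha).
    + intros a b h x; simpl; specialize (h x); lra.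
    + intro a; apply sig_ext; simpl; apply functional_extensionality; intro; lra.
  - exists (fun s => exists x : S, s = fun a => proj1_sig a x).
    split; [|split].
    + intros s0 [x Hx]; subst s0; unfold is_specific_state; repeat split; simpl; try lra.
      * destruct p as [p hp]; apply (sp_prob S P H p hp).
      * destruct p as [p hp]; apply (sp_prob S P H p hp).
      * intros p q h; apply h.
      * intros p q D. exists (exist _ _ (disjsum p q D)).
        unfold sp_le, pw_le; simpl; repeat split; intro y;
          destruct p as [p hp], q as [q hq]; simpl;
          pose proof (sp_prob S P H p hp y); pose proof (sp_prob S P H q hq y); lra.
    + intros p q h x. apply (h (fun a => proj1_sig a x)). exists x; reflexivity.
    + intros p q D. exists (exist _ _ (disjsum p q D)).
      unfold sp_le, pw_le; simpl; repeat split.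
      * intro y; destruct p as [p hp], q as [q hq]; simpl;
          pose proof (sp_prob S P H p hp y); pose proof (sp_prob S P H q hq y); lra.
      * intro y; destruct p as [p hp], q as [q hq]; simpl;
          pose proof (sp_prob S P H p hp y); pose proof (sp_prob S P H q hq y); lra.
      * intros s0 [x Hx]; subst s0; reflexivity.
Qed.

Section Part2.
Variables (T : Type) (le : T -> T -> Prop) (c : T -> T) (z o : T).
Hypothesis Hb : is_bpai le c z o.
Variable St : (T -> R) -> Prop.
Hypothesis HS : forall s, St s -> is_specific_state le c z o s.
Hypothesis Hfull : full_states le St.
Hypothesis Hunif : uniform_states le z St.

Definition SS := {s : T -> R | St s}.
Definition g (a : T) : SS -> R := fun s => proj1_sig s a.
Definition PP : (SS -> R) -> Prop := fun p => exists a, p = g a.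

Lemma g_mono a b : le a b -> pw_le (g a) (g b).
Proof. intros h [s hs]; unfold g; simpl. apply (HS s hs); exact h. Qed.

Lemma g_refl a b : pw_le (g a) (g b) -> le a b.
Proof. intros h; apply Hfull; intros s hs; apply (h (exist _ s hs)). Qed.

Lemma PP_spec : specific_set SS PP.
Proof.
  constructor.
  - intros p [a ->] [s hs]; unfold g; simpl; apply (HS s hs).
  - exists z; apply functional_extensionality; intros [s hs]; unfold g; simpl.
    symmetry; apply (HS s hs).
  - exists o; apply functional_extensionality; intros [s hs]; unfold g; simpl.
    symmetry; apply (HS s hs).
  - intros p [a ->]; exists (c a); apply functional_extensionality; intros [s hs];
      unfold g; simpl. symmetry; apply (HS s hs).
  - intros p q [a ->] [b ->] D.
    assert (Dab : disj le z a b).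
    { intros r h1 h2.
      assert (E : g r = fun _ => 0).
      { apply (D (g r)). exists r; reflexivity. apply g_mono; auto. apply g_mono; auto. }
      destruct Hb as [_ [Han [_ [Hzo _]]]].
      apply Han; [| apply Hzo].
      apply g_refl. rewrite E. intros [s hs]; unfold g; simpl.
      destruct (HS s hs) as [_ [Hz _]]; lra. }
    destruct (Hunif a b Dab) as [r [_ [_ Hr]]].
    exists r; apply functional_extensionality; intros [s hs]; unfold g; simpl.
    symmetry; apply (Hr s hs).
Qed.

Definition F (a : T) : sp_car SS PP := exist _ (g a) (ex_intro _ a eq_refl).

End Part2.

Theorem theorem4p2 :
  (forall (S : Type) (P : (S -> R) -> Prop) (H : specific_set S P),
      is_bpai (@sp_le S P) (sp_c H) (sp_z H) (sp_o H) /\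
      has_full_uniform_specific_states (@sp_le S P) (sp_c H) (sp_z H) (sp_o H)) /\
  (forall (T : Type) (le : T -> T -> Prop) (c : T -> T) (z o : T),
      is_bpai le c z o ->
      has_full_uniform_specific_states le c z o ->
      exists (S : Type) (P : (S -> R) -> Prop) (H : specific_set S P)
             (f : T -> sp_car S P),
        (forall a b, f a = f b -> a = b) /\
        (forall y, exists a, f a = y) /\
        (forall a b, le a b <-> sp_le (f a) (f b)) /\
        (forall a, f (c a) = sp_c H (f a)) /\
        f z = sp_z H /\ f o = sp_o H).
Proof.
  split; [exact part1|].
  intros T le c z o Hb [St [HS [Hfull Hunif]]].
  exists (SS T St), (PP T St), (PP_spec T le c z o Hb St HS Hfull Hunif), (F T St).
  assert (Hiff : forall a b, le a b <-> sp_le (F T St a) (F T St b)).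
  { intros a b; unfold sp_le; simpl; split.
    - apply (g_mono T le c z o St HS).
    - apply (g_refl T le St Hfull). }
  split; [|split; [|split; [exact Hiff|split; [|split]]]].
  - intros a b E. destruct Hb as [Hr [Han _]].
    apply Han; apply Hiff; rewrite E; intro; apply Rle_refl.
  - intros [p [a ->]]; exists a; apply sig_ext; reflexivity.
  - intro a; apply sig_ext; simpl; apply functional_extensionality; intros [s hs];
      unfold g; simpl; apply (HS s hs).
  - apply sig_ext; simpl; apply functional_extensionality; intros [s hs];
      unfold g; simpl; apply (HS s hs).
  - apply sig_ext; simpl; apply functional_extensionality; intros [s hs];
      unfold g; simpl; apply (HS s hs).
Qed.
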